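(* Let $B>1$, $p>0$, $f_p(x)=x^{2p}e^{-x^2}$, $n\in\mathbb{R}$. For $a>0$ with $2ap+n>-1$, as $j\to\infty$, $$\sum_{l\ge1}f_p^a\Big(\frac{l}{B^j}\Big)l^n=\frac{B^{(n+1)j}}{2a^{ap+\frac{n+1}{2}}}\Gamma\Big(ap+\frac{n+1}{2}\Big)+o\big(B^{(n+1)j}\big).$$ Moreover, for $a_1,a_2>0$ with $2(a_1+a_2)p+n>-1$ and fixed $\Delta j\in\mathbb{Z}$, as $j\to\infty$, $$\sum_{l\ge1}f_p^{a_1}\Big(\frac{l}{B^j}\Big)f_p^{a_2}\Big(\frac{l}{B^{j+\Delta j}}\Big)l^n=\frac{B^{(n+1)j}\,\tau_{p,a_1,a_2}(\Delta j)}{2(a_1+a_2)^{(a_1+a_2)p+\frac{n+1}{2}}}\Gamma\Big((a_1+a_2)p+\frac{n+1}{2}\Big)+o\big(B^{(n+1)j}\big),$$ where $$\tau_{p,a_1,a_2}(\Delta j)=\Big(\frac{a_1B^{\Delta j}+a_2B^{-\Delta j}}{a_1+a_2}\Big)^{-((a_1+a_2)p+\frac{n+1}{2})}B^{\Delta j((a_1-a_2)p+\frac{n+1}{2})}.$$ *)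

(* Defs.v *)
From Stdlib Require Import Reals.
From Coquelicot Require Import Coquelicot.
Open Scope R_scope.

Definition Gamma (s : R) : R :=
  RInt_gen (fun t => Rpower t (s - 1) * exp (- t))
           (at_right 0) (Rbar_locally p_infty).

(* f_p(x) = x^(2p) e^(-x^2); only ever evaluated at x > 0 below. *)
Definition fp (p x : R) : R := Rpower x (2 * p) * exp (- (x ^ 2)).

Definition fpa (p a x : R) : R := Rpower (fp p x) a.

Definition tau (B n p a1 a2 : R) (dj : Z) : R :=
  Rpower ((a1 * Rpower B (IZR dj) + a2 * Rpower B (- IZR dj)) / (a1 + a2))
         (- ((a1 + a2) * p + (n + 1) / 2))
  * Rpower B (IZR dj * ((a1 - a2) * p + (n + 1) / 2)).

(* Main.v *)
Require Import Defs.
From Stdlib Require Import Reals Lra Lia Classical.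
From Coquelicot Require Import Coquelicot.
Open Scope R_scope.

Definition Hyp (h : R -> R) (m : R) : Prop :=
  (forall x, 0 < x -> continuous h x) /\ (forall x, 0 <= h x) /\ 0 <= m /\
  (forall x y, 0 < x -> x <= y -> y <= m -> h x <= h y) /\
  (forall x y, 0 < x -> m <= x -> x <= y -> h y <= h x).

Lemma exRI h m : Hyp h m -> forall u v, 0 < u -> 0 < v -> ex_RInt h u v.
Proof.
  intros [Hc _] u v Hu Hv. apply (@ex_RInt_continuous R_CompleteNormedModule). intros z [Hz1 Hz2].
  apply Hc. apply Rlt_le_trans with (Rmin u v); auto.
  apply Rmin_case; auto.
Qed.

Lemma RInt_bounds h a b c1 c2 : a <= b -> ex_RInt h a b ->
  (forall y, a < y < b -> c1 <= h y <= c2) ->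
  (b - a) * c1 <= RInt h a b <= (b - a) * c2.
Proof.
  intros Hab Hex Hb. split.
  - replace ((b - a) * c1) with (RInt (fun _ => c1) a b).
    2:{ rewrite RInt_const. reflexivity. }
    apply RInt_le; auto. apply ex_RInt_const. intros; apply Hb; auto.
  - replace ((b - a) * c2) with (RInt (fun _ => c2) a b).
    2:{ rewrite RInt_const. reflexivity. }
    apply RInt_le; auto. apply ex_RInt_const. intros; apply Hb; auto.
Qed.

Lemma Chasles_R h m u v w : Hyp h m -> 0 < u -> 0 < v -> 0 < w ->
  RInt h u v + RInt h v w = RInt h u w.
Proof.
  intros H Hu Hv Hw. rewrite <- (RInt_Chasles h u v w); try (eapply exRI; eauto).
  reflexivity.
Qed.

Lemma cell_gen h m x e c1 c2 : Hyp h m -> 0 < x -> 0 < e ->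
  (forall y, x < y < x + e -> c1 <= h y <= c2) ->
  e * c1 <= RInt h x (x + e) <= e * c2.
Proof.
  intros H Hx He Hb.
  assert (K := RInt_bounds h x (x + e) c1 c2 ltac:(lra)
    ltac:(eapply exRI; eauto; lra) Hb).
  replace (x + e - x) with e in K by ring. exact K.
Qed.

Lemma cell_inc h m x e : Hyp h m -> 0 < x -> 0 < e -> x + e <= m ->
  e * h x <= RInt h x (x + e) <= e * h (x + e).
Proof.
  intros H Hx He Hm. apply cell_gen with m; auto.
  destruct H as (_&_&_&Hi&_). intros y Hy. split; apply Hi; lra.
Qed.

Lemma cell_dec h m x e : Hyp h m -> 0 < x -> 0 < e -> m <= x ->
  e * h (x + e) <= RInt h x (x + e) <= e * h x.
Proof.
  intros H Hx He Hm. apply cell_gen with m; auto.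
  destruct H as (_&_&_&_&Hd). intros y Hy. split; apply Hd; lra.
Qed.

Lemma cell_bnd h m x e P : Hyp h m -> 0 < e -> e <= x ->
  (forall y, e <= y -> h y <= P) ->
  0 <= RInt h x (x + e) <= e * P.
Proof.
  intros H He Hx HP. replace 0 with (e * 0) by ring.
  apply cell_gen with m; auto. lra.
  destruct H as (_&Hp&_). intros y Hy. split; auto. apply HP; lra.
Qed.

Definition T (h : R -> R) (e : R) (N : nat) : R := sum_n (fun k => h (INR (S k) * e)) N.

Lemma psum_inv h m e P : Hyp h m -> 0 < e -> (forall y, e <= y -> h y <= P) ->
  forall N, let x := INR (S N) * e in
  (x <= m -> RInt h e x <= e * T h e N <= RInt h e x + e * h x) /\
  (m < x -> RInt h e (x + e) - e * P <= e * T h e N <= RInt h e x + 2 * e * P).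
Proof.
  intros H He HP.
  assert (Hp : forall y, 0 <= h y) by (destruct H as (_&Hp&_); exact Hp).
  assert (P0 : 0 <= P) by (apply Rle_trans with (h e); auto; apply HP; lra).
  assert (Hpos : forall N, 0 < INR (S N) * e).
  { intro N. apply Rmult_lt_0_compat; auto. apply lt_0_INR; lia. }
  assert (Hge : forall N, e <= INR (S N) * e).
  { intro N. rewrite <- (Rmult_1_l e) at 1. apply Rmult_le_compat_r; try lra.
    apply (le_INR 1); lia. }
  induction N as [|N IH]; intro x.
  - unfold T; rewrite sum_O. subst x. simpl (INR 1).
    rewrite Rmult_1_l. split; intro Hm.
    + rewrite RInt_point. simpl. unfold zero; simpl. split.
      * apply Rmult_le_pos; auto; lra.
      * lra.
    + split.
      * destruct (cell_dec h m e e H He He (Rlt_le _ _ Hm)). nra.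
      * rewrite RInt_point. unfold zero; simpl.
        assert (h e <= P) by (apply HP; lra). nra.
  - assert (Ex : x = INR (S N) * e + e) by (subst x; rewrite S_INR; ring).
    assert (TS : e * T h e (S N) = e * T h e N + e * h x).
    { unfold T. rewrite sum_Sn.
      change (plus ?a ?b) with (Rplus a b). unfold x. ring. }
    rewrite TS. set (x0 := INR (S N) * e) in *.
    specialize (Hpos N). specialize (Hge N). fold x0 in Hpos, Hge.
    destruct IH as [IH1 IH2].
    assert (C1 := Chasles_R h m e x0 x H He Hpos ltac:(lra)).
    split; intro Hm.
    + destruct (IH1 ltac:(lra)) as [A1 A2].
      destruct (cell_inc h m x0 e H Hpos He ltac:(lra)) as [B1 B2].
      rewrite <- Ex in B1, B2. lra.
    + assert (C2 := Chasles_R h m e x (x + e) H He ltac:(lra) ltac:(lra)).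
      assert (hxP : h x <= P) by (apply HP; lra).
      assert (hx0P : h x0 <= P) by (apply HP; lra).
      destruct (cell_dec h m x e H ltac:(lra) He ltac:(lra)) as [D1 D2].
      destruct (Rle_or_lt x0 m) as [Hm0|Hm0].
      * destruct (IH1 Hm0) as [A1 A2].
        destruct (cell_bnd h m x0 e P H He Hge HP) as [E1 E2].
        rewrite <- Ex in E1, E2. nra.
      * destruct (IH2 Hm0) as [A1 A2].
        destruct (cell_dec h m x0 e H Hpos He ltac:(lra)) as [F1 F2].
        rewrite <- Ex in F1, F2, A1. lra.
Qed.

Lemma Pbound h m e : Hyp h m -> 0 < e -> forall y, e <= y -> h y <= h m + h e.
Proof.
  intros H He y Hy. destruct H as (_&Hp&Hm&Hi&Hd).
  assert (A := Hp m). assert (B := Hp e).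
  destruct (Rle_or_lt y m) as [C|C].
  - assert (h y <= h m) by (apply Hi; lra). lra.
  - destruct (Rle_or_lt m e) as [D|D].
    + assert (h y <= h e) by (apply Hd; lra). lra.
    + assert (h y <= h m) by (apply Hd; lra). lra.
Qed.

Lemma psum_bounds h m I e : Hyp h m -> 0 < e ->
  (forall u v, 0 < u -> u <= v -> RInt h u v <= I) ->
  forall N, let P := h m + h e in
  RInt h e (INR (S N) * e + e) - e * P <= e * T h e N <= I + 2 * e * P.
Proof.
  intros H He HIa N P.
  assert (HP := Pbound h m e H He). fold P in HP.
  assert (Hp : forall y, 0 <= h y) by (destruct H as (_&Hp&_); exact Hp).
  assert (P0 : 0 <= P) by (apply Rle_trans with (h e); auto; apply HP; lra).
  assert (Hge : e <= INR (S N) * e).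
  { rewrite <- (Rmult_1_l e) at 1. apply Rmult_le_compat_r; try lra.
    apply (le_INR 1); lia. }
  set (x := INR (S N) * e) in *.
  destruct (psum_inv h m e P H He HP N) as [A B]. fold x in A, B.
  assert (Ix : RInt h e x <= I) by (apply HIa; lra).
  assert (hxP : h x <= P) by (apply HP; lra).
  destruct (Rle_or_lt x m) as [C|C].
  - destruct (A C) as [A1 A2].
    assert (C1 := Chasles_R h m e x (x + e) H He ltac:(lra) ltac:(lra)).
    destruct (cell_bnd h m x e P H He Hge HP). nra.
  - destruct (B C). nra.
Qed.

Lemma series_bounds h m I e : Hyp h m -> 0 < e ->
  (forall u v, 0 < u -> u <= v -> RInt h u v <= I) ->
  let P := h m + h e in let a := fun k => h (INR (S k) * e) in
  ex_series a /\ e * Series a <= I + 2 * e * P /\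
  forall N, RInt h e (INR (S N) * e + e) - e * P <= e * Series a.
Proof.
  intros H He HIa P a.
  assert (Hp : forall y, 0 <= h y) by (destruct H as (_&Hp&_); exact Hp).
  assert (B := psum_bounds h m I e H He HIa). fold P in B.
  assert (Hinc : forall n, sum_n a n <= sum_n a (S n)).
  { intro n. rewrite sum_Sn. change (plus ?x ?y) with (x + y).
    assert (0 <= a (S n)) by apply Hp. lra. }
  destruct (ex_finite_lim_seq_incr (sum_n a) ((I + 2 * e * P) / e) Hinc) as [l Hl].
  { intro n. destruct (B n) as [_ B2]. unfold T in B2. fold a in B2.
    apply Rmult_le_reg_l with e; auto. field_simplify; lra. }
  assert (Hs : is_series a l) by exact Hl.
  rewrite (is_series_unique a l Hs).
  split; [exists l; exact Hs|]. split.
  - assert (K := is_lim_seq_le (fun n => e * sum_n a n) (fun _ => I + 2 * e * P)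
       (e * l) (I + 2 * e * P)).
    simpl in K. apply K.
    + intro n. destruct (B n) as [_ B2]. exact B2.
    + apply (is_lim_seq_scal_l _ e l Hl).
    + apply is_lim_seq_const.
  - intro N. destruct (B N) as [B1 _]. unfold T in B1. fold a in B1.
    assert (sum_n a N <= l) by (apply (is_lim_seq_incr_compare _ l Hl Hinc)).
    nra.
Qed.

Lemma lim_ev (u : nat -> R) (c : R) : is_lim_seq u 0 -> 0 < c ->
  eventually (fun n => Rabs (u n) < c).
Proof.
  intros Hu Hc. apply is_lim_seq_spec in Hu.
  destruct (Hu (mkposreal c Hc)) as [N HN]. exists N. intros n Hn.
  specialize (HN n Hn). simpl in HN. rewrite Rminus_0_r in HN. exact HN.
Qed.

Lemma riemann_lim h m I : Hyp h m ->
  (forall u v, 0 < u -> u <= v -> RInt h u v <= I) ->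
  (forall d, 0 < d -> exists eta, 0 < eta /\ exists X, forall u v,
       0 < u -> u < eta -> X < v -> I - d < RInt h u v) ->
  forall eps : nat -> R, (forall j, 0 < eps j) -> is_lim_seq eps 0 ->
  is_lim_seq (fun j => eps j * h (eps j)) 0 ->
  is_lim_seq (fun j => eps j * Series (fun k => h (INR (S k) * eps j))) I.
Proof.
  intros H HIa HIb eps Hpos Hl Hl2.
  assert (Hp : forall y, 0 <= h y) by (destruct H as (_&Hp&_); exact Hp).
  apply is_lim_seq_spec. intro dd. assert (Hd := cond_pos dd). set (d := pos dd) in *.
  destruct (HIb (d / 2) ltac:(lra)) as (eta & Heta & X & HX).
  assert (Hl3 : is_lim_seq (fun j => eps j * h m) 0).
  { replace (Finite 0) with (Rbar_mult 0 (h m)) by (simpl; f_equal; ring).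
    apply is_lim_seq_scal_r. exact Hl. }
  assert (E1 := lim_ev _ eta Hl Heta).
  assert (E2 := lim_ev _ (d / 8) Hl2 ltac:(lra)).
  assert (E3 := lim_ev _ (d / 8) Hl3 ltac:(lra)).
  destruct E1 as [N1 E1], E2 as [N2 E2], E3 as [N3 E3].
  exists (N1 + N2 + N3)%nat. intros j Hj.
  specialize (E1 j ltac:(lia)). specialize (E2 j ltac:(lia)).
  specialize (E3 j ltac:(lia)).
  set (e := eps j) in *. assert (He : 0 < e) by apply Hpos.
  rewrite Rabs_pos_eq in E1, E2, E3 by (apply Rmult_le_pos || idtac; auto; lra).
  destruct (series_bounds h m I e H He HIa) as (_ & U & L).
  destruct (INR_unbounded (X / e)) as [N HN].
  specialize (L N).
  assert (XN : X < INR (S N) * e + e).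
  { rewrite S_INR.
    assert (X = (X / e) * e) by (field; lra).
    assert ((X / e) * e < INR N * e) by (apply Rmult_lt_compat_r; auto).
    lra. }
  assert (Hint := HX e _ He E1 XN).
  set (S0 := Series (fun k => h (INR (S k) * e))) in *.
  assert (e * (h m + h e) = e * h m + e * h e) by ring.
  apply Rabs_def1; lra.
Qed.


Lemma Rpower_exd a x : 0 < x -> ex_derive (fun t => Rpower t a) x.
Proof. intro Hx. unfold Rpower. auto_derive. exact Hx. Qed.

Lemma Rpower_cont a x : 0 < x -> continuous (fun t => Rpower t a) x.
Proof. intro Hx. apply (@ex_derive_continuous R_AbsRing R_NormedModule). apply Rpower_exd; auto. Qed.

Lemma Rpower_gt0 x a : 0 < Rpower x a.
Proof. unfold Rpower. apply exp_pos. Qed.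

Lemma exp_le_inc x y : x <= y -> exp x <= exp y.
Proof.
  intro H. destruct (Rle_lt_or_eq_dec x y H) as [H1|H1].
  - left; apply exp_increasing; auto.
  - subst; lra.
Qed.

Definition hh (al c x : R) : R := Rpower x al * exp (-(c * x ^ 2)).

Lemma hh_exp al c x : hh al c x = exp (al * ln x - c * x ^ 2).
Proof. unfold hh, Rpower. rewrite <- exp_plus. f_equal. Qed.

Lemma ln_upper t : 0 < t -> ln t <= t - 1.
Proof. intro Ht. assert (K := exp_ineq1_le (ln t)). rewrite exp_ln in K; lra. Qed.

Lemma ln_diff_bounds x y : 0 < x -> x <= y ->
  (y - x) / y <= ln y - ln x <= (y - x) / x.
Proof.
  intros Hx Hxy. assert (Hy : 0 < y) by lra. split.
  - assert (K := ln_upper (x / y) ltac:(apply Rdiv_lt_0_compat; lra)).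
    rewrite ln_div in K by lra.
    replace ((y - x) / y) with (1 - x / y) by (field; lra). lra.
  - assert (K := ln_upper (y / x) ltac:(apply Rdiv_lt_0_compat; lra)).
    rewrite ln_div in K by lra.
    replace ((y - x) / x) with (y / x - 1) by (field; lra). lra.
Qed.

Definition mpk al c := sqrt (Rmax al 0 / (2 * c)).

Lemma mpk_sq al c : 0 < c -> mpk al c ^ 2 = Rmax al 0 / (2 * c).
Proof.
  intro Hc. unfold mpk. simpl. rewrite Rmult_1_r. apply sqrt_sqrt.
  apply Rdiv_le_0_compat. apply Rmax_r. lra.
Qed.

Lemma hh_inc al c x y : 0 < c -> 0 < x -> x <= y -> y <= mpk al c ->
  hh al c x <= hh al c y.
Proof.
  intros Hc Hx Hxy Hym. rewrite !hh_exp. apply exp_le_inc.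
  assert (Hsq := mpk_sq al c Hc).
  assert (Hm0 : 0 <= mpk al c) by apply sqrt_pos.
  assert (Hy2 : y ^ 2 <= Rmax al 0 / (2 * c)).
  { rewrite <- Hsq. apply pow_incr. lra. }
  destruct (Rle_or_lt al 0) as [Ha|Ha].
  - rewrite Rmax_right in Hy2 by lra. unfold Rdiv in Hy2. rewrite Rmult_0_l in Hy2.
    nra.
  - rewrite Rmax_left in Hy2 by lra.
    destruct (ln_diff_bounds x y Hx Hxy) as [L1 _].
    assert (Hy : 0 < y) by lra.
    assert (K : 2 * c * y ^ 2 <= al).
    { apply Rmult_le_reg_r with (/ (2 * c)). apply Rinv_0_lt_compat; lra.
      replace (2 * c * y ^ 2 * / (2 * c)) with (y ^ 2) by (field; lra).
      exact Hy2. }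
    assert (K2 : al * ((y - x) / y) >= c * (y ^ 2 - x ^ 2)).
    { replace (al * ((y - x) / y)) with ((y - x) * (al / y)) by (field; lra).
      assert (2 * c * y <= al / y).
      { apply Rmult_le_reg_r with y; auto.
        replace (al / y * y) with al by (field; lra). nra. }
      assert (c * (y ^ 2 - x ^ 2) <= (y - x) * (2 * c * y)).
      { replace (c * (y ^ 2 - x ^ 2)) with ((y - x) * (c * (y + x))) by ring.
        apply Rmult_le_compat_l; nra. }
      assert ((y - x) * (2 * c * y) <= (y - x) * (al / y)).
      { apply Rmult_le_compat_l; lra. }
      lra. }
    nra.
Qed.

Lemma hh_dec al c x y : 0 < c -> 0 < x -> mpk al c <= x -> x <= y ->
  hh al c y <= hh al c x.
Proof.
  intros Hc Hx Hxm Hxy. rewrite !hh_exp. apply exp_le_inc.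
  assert (Hsq := mpk_sq al c Hc).
  assert (Hm0 : 0 <= mpk al c) by apply sqrt_pos.
  assert (Hx2 : Rmax al 0 / (2 * c) <= x ^ 2).
  { rewrite <- Hsq. apply pow_incr. lra. }
  destruct (ln_diff_bounds x y Hx Hxy) as [L1 L2].
  assert (Hy : 0 < y) by lra.
  assert (Hxy2 : x ^ 2 <= y ^ 2) by (apply pow_incr; lra).
  destruct (Rle_or_lt al 0) as [Ha|Ha].
  - assert (0 <= (y - x) / y) by (apply Rdiv_le_0_compat; lra). nra.
  - rewrite Rmax_left in Hx2 by lra.
    assert (K : al <= 2 * c * x ^ 2).
    { apply Rmult_le_reg_r with (/ (2 * c)). apply Rinv_0_lt_compat; lra.
      replace (2 * c * x ^ 2 * / (2 * c)) with (x ^ 2) by (field; lra).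
      exact Hx2. }
    assert (K2 : al * ((y - x) / x) <= c * (y ^ 2 - x ^ 2)).
    { replace (al * ((y - x) / x)) with ((y - x) * (al / x)) by (field; lra).
      assert (al / x <= 2 * c * x).
      { apply Rmult_le_reg_r with x; auto.
        replace (al / x * x) with al by (field; lra). nra. }
      assert ((y - x) * (2 * c * x) <= c * (y ^ 2 - x ^ 2)).
      { replace (c * (y ^ 2 - x ^ 2)) with ((y - x) * (c * (y + x))) by ring.
        apply Rmult_le_compat_l; nra. }
      assert ((y - x) * (al / x) <= (y - x) * (2 * c * x)).
      { apply Rmult_le_compat_l; lra. }
      lra. }
    nra.
Qed.


Lemma exRI_c (f : R -> R) : (forall x, 0 < x -> continuous f x) ->
  forall u v, 0 < u -> 0 < v -> ex_RInt f u v.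
Proof.
  intros Hc u v Hu Hv. apply (@ex_RInt_continuous R_CompleteNormedModule).
  intros z [Hz1 Hz2]. apply Hc. apply Rlt_le_trans with (Rmin u v); auto.
  apply Rmin_case; auto.
Qed.

Lemma ball_R (x e y : R) : ball x e y <-> Rabs (y - x) < e.
Proof. reflexivity. Qed.

Lemma improper_sup (f : R -> R) M : (forall x, 0 < x -> continuous f x) ->
  (forall x, 0 <= f x) ->
  (forall u v, 0 < u -> u <= v -> RInt f u v <= M) ->
  exists L, is_RInt_gen f (at_right 0) (Rbar_locally p_infty) L /\
    (forall u v, 0 < u -> u <= v -> RInt f u v <= L) /\
    (forall d, 0 < d -> exists eta, 0 < eta /\ exists X, forall u v,
       0 < u -> u < eta -> X < v -> L - d < RInt f u v).
Proof.
  intros Hc Hp HM.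
  assert (Ch : forall u v w, 0 < u -> 0 < v -> 0 < w ->
     RInt f u v + RInt f v w = RInt f u w).
  { intros u v w Hu Hv Hw. rewrite <- (RInt_Chasles f u v w);
      try (apply exRI_c; auto). reflexivity. }
  assert (Pos : forall u v, 0 < u -> u <= v -> 0 <= RInt f u v).
  { intros u v Hu Huv. apply RInt_ge_0; auto. apply exRI_c; auto; lra. }
  set (E := fun y => exists u v, 0 < u /\ u <= v /\ y = RInt f u v).
  destruct (completeness E) as [L [HL1 HL2]].
  { exists M. intros y (u & v & Hu & Huv & ->). apply HM; auto. }
  { exists (RInt f 1 1). exists 1, 1. repeat split; lra. }
  assert (Ia : forall u v, 0 < u -> u <= v -> RInt f u v <= L).
  { intros u v Hu Huv. apply HL1. exists u, v; auto. }
  assert (Ib : forall d, 0 < d -> exists eta, 0 < eta /\ exists X, forall u v,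
       0 < u -> u < eta -> X < v -> L - d < RInt f u v).
  { intros d Hd.
    assert (Ex : exists y, E y /\ L - d < y).
    { apply NNPP. intro Hn. assert (L <= L - d); [|lra].
      apply HL2. intros y Ey. apply Rnot_lt_le. intro Hy. apply Hn. exists y; auto. }
    destruct Ex as (y & (u0 & v0 & Hu0 & Huv0 & ->) & Hy).
    exists u0. split; auto. exists v0. intros u v Hu Hu' Hv.
    rewrite <- (Ch u u0 v) by lra. rewrite <- (Ch u0 v0 v) by lra.
    assert (0 <= RInt f u u0) by (apply Pos; lra).
    assert (0 <= RInt f v0 v) by (apply Pos; lra). lra. }
  exists L. split; [|split; auto].
  intros P [eps HP].
  destruct (Ib eps (cond_pos eps)) as (eta & Heta & X & HX).
  apply Filter_prod with (fun u => 0 < u < eta) (fun v => Rmax X eta < v).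
  - exists (mkposreal eta Heta). intros y Hy Hy0. change (Rabs (y - 0) < eta) in Hy.
    rewrite Rminus_0_r, Rabs_pos_eq in Hy by lra. lra.
  - exists (Rmax X eta). auto.
  - intros u v Hu Hv. simpl.
    assert (Hv1 : X < v) by (apply Rle_lt_trans with (Rmax X eta); auto; apply Rmax_l).
    assert (Hv2 : eta < v) by (apply Rle_lt_trans with (Rmax X eta); auto; apply Rmax_r).
    exists (RInt f u v). split.
    + apply (@RInt_correct R_CompleteNormedModule). apply exRI_c; auto; lra.
    + apply HP. change (Rabs (RInt f u v - L) < eps).
      assert (K1 := HX u v ltac:(lra) ltac:(lra) Hv1).
      assert (K2 := Ia u v ltac:(lra) ltac:(lra)).
      apply Rabs_def1; lra.
Qed.


Definition G (s t : R) : R := Rpower t (s - 1) * exp (- t).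

Lemma G_cont s x : 0 < x -> continuous (G s) x.
Proof.
  intro Hx. apply (@ex_derive_continuous R_AbsRing R_NormedModule).
  unfold G, Rpower. auto_derive. exact Hx.
Qed.

Lemma G_pos s x : 0 <= G s x.
Proof. unfold G. apply Rmult_le_pos; left; [apply Rpower_gt0|apply exp_pos]. Qed.

Lemma Rpower_1_base y : Rpower 1 y = 1.
Proof. unfold Rpower. rewrite ln_1, Rmult_0_r. apply exp_0. Qed.

Lemma pow_int s u : 0 < s -> 0 < u -> u <= 1 ->
  RInt (fun t => Rpower t (s - 1)) u 1 <= / s.
Proof.
  intros Hs Hu Hu1.
  assert (K : is_RInt (fun t => Rpower t (s - 1)) u 1
                 (minus ((fun t => / s * Rpower t s) 1) ((fun t => / s * Rpower t s) u))).
  { refine (@is_RInt_derive R_CompleteNormedModule (fun t => / s * Rpower t s) _ u 1 _ _).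
    - intros x [Hx1 Hx2]. assert (Hx : 0 < x).
      { apply Rlt_le_trans with (Rmin u 1); auto. apply Rmin_case; lra. }
      assert (D := derivable_pt_lim_power x s Hx). apply is_derive_Reals in D.
      assert (D2 := is_derive_scal _ x (/ s) _ D).
      replace (/ s * (s * Rpower x (s - 1))) with (Rpower x (s - 1)) in D2
        by (field; lra). exact D2.
    - intros x [Hx1 Hx2]. apply Rpower_cont.
      apply Rlt_le_trans with (Rmin u 1); auto. apply Rmin_case; lra. }
  rewrite (is_RInt_unique _ _ _ _ K). simpl. unfold minus, plus, opp; simpl.
  rewrite Rpower_1_base. assert (0 < Rpower u s) by apply Rpower_gt0.
  assert (0 < / s) by (apply Rinv_0_lt_compat; lra). nra.
Qed.

Lemma exp_int C v : 0 <= C -> 1 <= v ->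
  RInt (fun t => C * exp (- t / 2)) 1 v <= 2 * C.
Proof.
  intros HC Hv.
  assert (K : is_RInt (fun t => C * exp (- t / 2)) 1 v
     (minus ((fun t => -2 * C * exp (- t / 2)) v) ((fun t => -2 * C * exp (- t / 2)) 1))).
  { refine (@is_RInt_derive R_CompleteNormedModule (fun t => -2 * C * exp (- t / 2)) _ 1 v _ _).
    - intros x _. auto_derive; auto. replace (- x * / 2) with (- x / 2) by field. change RinvImpl.Rinv with Rinv. field.
    - intros x _. apply (@ex_derive_continuous R_AbsRing R_NormedModule).
      auto_derive. auto. }
  rewrite (is_RInt_unique _ _ _ _ K). simpl. unfold minus, plus, opp; simpl.
  assert (0 < exp (- v / 2)) by apply exp_pos.
  assert (exp (- (1) / 2) <= 1).
  { assert (K1 := exp_le_inc (- (1) / 2) 0 ltac:(lra)). rewrite exp_0 in K1. exact K1. }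
  assert (0 <= C * exp (- v / 2)) by nra.
  assert (C * exp (- (1) / 2) <= C) by nra.
  lra.
Qed.

Lemma C_bound s : exists C, 0 < C /\ forall t, 1 <= t -> Rpower t (s - 1) <= C * exp (t / 2).
Proof.
  set (A := 2 * (Rabs (s - 1) + 1)).
  assert (HA : 0 < A) by (unfold A; assert (0 <= Rabs (s - 1)) by apply Rabs_pos; lra).
  exists (exp (Rabs (s - 1) * Rabs (ln A - 1))). split; [apply exp_pos|].
  intros t Ht. unfold Rpower. rewrite <- exp_plus. apply exp_le_inc.
  assert (L1 := ln_upper (t / A) ltac:(apply Rdiv_lt_0_compat; lra)).
  rewrite ln_div in L1 by lra.
  assert (Hl : 0 <= ln t) by (rewrite <- ln_1; apply ln_le; lra).
  assert (Ha := Rabs_pos (s - 1)).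
  assert (Ha2 := Rle_abs (s - 1)).
  assert (Hb := Rle_abs (ln A - 1)).
  assert (K1 : (s - 1) * ln t <= Rabs (s - 1) * ln t) by nra.
  assert (K2 : ln t <= t / A + (ln A - 1)) by lra.
  assert (K3 : Rabs (s - 1) * (t / A) <= t / 2).
  { unfold Rdiv. apply Rmult_le_reg_r with A; auto.
    replace (Rabs (s - 1) * (t * / A) * A) with (Rabs (s - 1) * t) by (field; lra).
    unfold A. nra. }
  nra.
Qed.

Lemma G_bound s : 0 < s -> exists M, forall u v, 0 < u -> u <= v -> RInt (G s) u v <= M.
Proof.
  intro Hs. destruct (C_bound s) as (C & HC & HCb).
  exists (/ s + 2 * C). intros u v Hu Huv.
  assert (Ch : forall u v w, 0 < u -> 0 < v -> 0 < w ->
     RInt (G s) u v + RInt (G s) v w = RInt (G s) u w).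
  { intros a b c Ha Hb Hc. rewrite <- (RInt_Chasles (G s) a b c);
      try (apply exRI_c; auto; intros; apply G_cont; auto). reflexivity. }
  assert (Pos : forall a b, 0 < a -> a <= b -> 0 <= RInt (G s) a b).
  { intros a b Ha Hab. apply RInt_ge_0; auto.
    apply exRI_c; auto; try lra. intros; apply G_cont; auto.
    intros; apply G_pos. }
  set (u' := Rmin u 1). set (v' := Rmax v 1).
  assert (Hu' : 0 < u' /\ u' <= u /\ u' <= 1).
  { unfold u'. split; [apply Rmin_case; lra|split; [apply Rmin_l|apply Rmin_r]]. }
  assert (Hv' : v <= v' /\ 1 <= v') by (unfold v'; split; [apply Rmax_l|apply Rmax_r]).
  assert (E1 : RInt (G s) u v <= RInt (G s) u' v').
  { rewrite <- (Ch u' u v') by lra. rewrite <- (Ch u v v') by lra.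
    assert (0 <= RInt (G s) u' u) by (apply Pos; lra).
    assert (0 <= RInt (G s) v v') by (apply Pos; lra). lra. }
  rewrite <- (Ch u' 1 v') in E1 by lra.
  assert (E2 : RInt (G s) u' 1 <= / s).
  { apply Rle_trans with (RInt (fun t => Rpower t (s - 1)) u' 1).
    - apply RInt_le; try lra.
      + apply exRI_c; try lra. intros; apply G_cont; auto.
      + apply exRI_c; try lra. intros; apply Rpower_cont; auto.
      + intros x Hx. unfold G. assert (0 < Rpower x (s - 1)) by apply Rpower_gt0.
        assert (exp (- x) <= 1) by (rewrite <- exp_0; apply exp_le_inc; lra). nra.
    - apply pow_int; lra. }
  assert (E3 : RInt (G s) 1 v' <= 2 * C).
  { apply Rle_trans with (RInt (fun t => C * exp (- t / 2)) 1 v').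
    - apply RInt_le; try lra.
      + apply exRI_c; try lra. intros; apply G_cont; auto.
      + apply (@ex_RInt_continuous R_CompleteNormedModule). intros z _.
        apply (@ex_derive_continuous R_AbsRing R_NormedModule). auto_derive. auto.
      + intros x Hx. unfold G. assert (K := HCb x ltac:(lra)).
        assert (0 < exp (- x)) by apply exp_pos.
        replace (exp (- x / 2)) with (exp (x / 2) * exp (- x)).
        2:{ rewrite <- exp_plus. f_equal. field. }
        nra.
    - apply exp_int; lra. }
  lra.
Qed.

Lemma Gamma_props s : 0 < s -> exists L,
  RInt_gen (fun t => Rpower t (s - 1) * exp (- t)) (at_right 0) (Rbar_locally p_infty) = L /\
  (forall u v, 0 < u -> u <= v -> RInt (G s) u v <= L) /\
  (forall d, 0 < d -> exists eta, 0 < eta /\ exists X, forall u v,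
       0 < u -> u < eta -> X < v -> L - d < RInt (G s) u v).
Proof.
  intro Hs. destruct (G_bound s Hs) as [M HM].
  destruct (improper_sup (G s) M (fun x Hx => G_cont s x Hx) (G_pos s) HM)
    as (L & HL & Ha & Hb).
  exists L. split; auto.
  refine (@is_RInt_gen_unique R_CompleteNormedModule _ _ _ _ (G s) L HL).
Qed.


Lemma Rpower_sq y : 0 < y -> y ^ 2 = Rpower y 2.
Proof. intro Hy. rewrite <- (Rpower_pow 2 y Hy). simpl. f_equal; lra. Qed.

Lemma Rpower_succ y a : 0 < y -> y * Rpower y (a - 1) = Rpower y a.
Proof.
  intro Hy. rewrite <- (Rpower_1 y Hy) at 1. rewrite <- Rpower_plus. f_equal. ring.
Qed.

Lemma subst_eq al c u v : 0 < c -> 0 < u -> 0 < v ->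
  RInt (hh al c) u v =
  / (2 * Rpower c ((al + 1) / 2)) * RInt (G ((al + 1) / 2)) (c * u ^ 2) (c * v ^ 2).
Proof.
  intros Hc Hu Hv. set (s := (al + 1) / 2).
  assert (Hpos : forall x, Rmin u v <= x <= Rmax u v -> 0 < x).
  { intros x [Hx _]. apply Rlt_le_trans with (Rmin u v); auto. apply Rmin_case; auto. }
  assert (K := @is_RInt_comp R_CompleteNormedModule (G s) (fun x => c * x ^ 2)
     (fun x => 2 * c * x) u v).
  assert (K1 : is_RInt (fun y => scal (2 * c * y) (G s (c * y ^ 2))) u v
                 (RInt (G s) (c * u ^ 2) (c * v ^ 2))).
  { apply K.
    - intros x Hx. apply G_cont. specialize (Hpos x Hx). apply Rmult_lt_0_compat; auto; apply pow_lt; auto.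
    - intros x Hx. split.
      + auto_derive; auto. ring.
      + apply (@ex_derive_continuous R_AbsRing R_NormedModule). auto_derive. auto. }
  clear K.
  assert (K2 := is_RInt_scal _ u v (/ (2 * Rpower c s)) _ K1).
  apply is_RInt_unique. refine (is_RInt_ext _ _ u v _ _ K2).
  intros y Hy. assert (Hy0 : 0 < y).
  { destruct Hy as [Hy _]. apply Rle_lt_trans with (Rmin u v); auto.
    apply Rmin_case; lra. }
  change (scal ?a ?b) with (a * b).
  unfold G, hh.
  assert (e1 : Rpower (c * y ^ 2) (s - 1) = Rpower c (s - 1) * Rpower y (al - 1)).
  { rewrite <- Rpower_mult_distr by (auto; nra).
    f_equal. rewrite Rpower_sq, Rpower_mult by auto. f_equal. unfold s; field. }
  rewrite e1.
  assert (e2 := Rpower_succ c s Hc). assert (e3 := Rpower_succ y al Hy0).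
  change (scal ?a ?b) with (a * b).
  assert (Hcs : 0 < Rpower c s) by apply Rpower_gt0.
  replace (2 * c * y * (Rpower c (s - 1) * Rpower y (al - 1) * exp (- (c * y ^ 2))))
    with (2 * (c * Rpower c (s - 1)) * (y * Rpower y (al - 1)) * exp (- (c * y ^ 2)))
    by ring.
  rewrite e2, e3. match goal with |- ?a = ?b => change (@eq R a b) end. field. lra.
Qed.

Lemma hh_Hyp al c : 0 < c -> Hyp (hh al c) (mpk al c).
Proof.
  intro Hc. unfold Hyp. split; [|split; [|split; [|split]]].
  - intros x Hx. apply (@ex_derive_continuous R_AbsRing R_NormedModule).
    unfold hh, Rpower. auto_derive. exact Hx.
  - intro x. unfold hh. apply Rmult_le_pos; left; [apply Rpower_gt0|apply exp_pos].
  - apply sqrt_pos.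
  - intros x y Hx Hxy Hy. apply hh_inc; auto.
  - intros x y Hx Hxm Hxy. apply hh_dec; auto.
Qed.

Lemma rp_lim (eps : nat -> R) b : (forall j, 0 < eps j) -> is_lim_seq eps 0 -> 0 < b ->
  is_lim_seq (fun j => Rpower (eps j) b) 0.
Proof.
  intros Hp Hl Hb. apply is_lim_seq_spec. intro d.
  assert (Hd := cond_pos d).
  assert (Hr : 0 < Rpower d (/ b)) by apply Rpower_gt0.
  destruct (lim_ev eps _ Hl Hr) as [N HN]. exists N. intros n Hn.
  specialize (HN n Hn). rewrite Rabs_pos_eq in HN by (left; apply Hp).
  rewrite Rminus_0_r, Rabs_pos_eq by (left; apply Rpower_gt0).
  assert (K := Rlt_Rpower_l (eps n) (Rpower d (/ b)) b Hb (conj (Hp n) HN)).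
  rewrite Rpower_mult, Rinv_l, Rpower_1 in K by lra. exact K.
Qed.

Lemma ehh_lim al c (eps : nat -> R) : -1 < al -> 0 < c ->
  (forall j, 0 < eps j) -> is_lim_seq eps 0 ->
  is_lim_seq (fun j => eps j * hh al c (eps j)) 0.
Proof.
  intros Ha Hc Hp Hl.
  apply is_lim_seq_le_le with (fun _ => 0) (fun j => Rpower (eps j) (al + 1)).
  - intro j. assert (He := Hp j). unfold hh. split.
    + apply Rmult_le_pos; [lra|]. apply Rmult_le_pos; left; [apply Rpower_gt0|apply exp_pos].
    + replace (al + 1) with (1 + al) by ring. rewrite Rpower_plus, Rpower_1 by auto.
      assert (0 < Rpower (eps j) al) by apply Rpower_gt0.
      assert (exp (- (c * eps j ^ 2)) <= 1).
      { assert (K := exp_le_inc (- (c * eps j ^ 2)) 0).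
        rewrite exp_0 in K. apply K. assert (0 <= eps j ^ 2) by (apply pow_le; lra). nra. }
      assert (0 < eps j * Rpower (eps j) al) by nra.
      nra.
  - apply is_lim_seq_const.
  - apply rp_lim; auto. lra.
Qed.

Lemma sq_lt x y : 0 <= x < y -> x ^ 2 < y ^ 2.
Proof. intros [H1 H2]. simpl. nra. Qed.

Lemma hh_main (Gam : R -> R) al c :
  (forall s, 0 < s -> Gam s = RInt_gen (fun t => Rpower t (s - 1) * exp (- t))
                                (at_right 0) (Rbar_locally p_infty)) ->
  -1 < al -> 0 < c ->
  (forall e, 0 < e -> ex_series (fun k => hh al c (INR (S k) * e))) /\
  (forall eps : nat -> R, (forall j, 0 < eps j) -> is_lim_seq eps 0 ->
   is_lim_seq (fun j => eps j * Series (fun k => hh al c (INR (S k) * eps j)))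
     (/ (2 * Rpower c ((al + 1) / 2)) * Gam ((al + 1) / 2))).
Proof.
  intros HG Ha Hc. set (s := (al + 1) / 2).
  assert (Hs : 0 < s) by (unfold s; lra).
  destruct (Gamma_props s Hs) as (L & HL & Ia & Ib).
  rewrite <- HG in HL by auto. rewrite HL.
  set (k := / (2 * Rpower c s)).
  assert (Hk : 0 < k) by (unfold k; apply Rinv_0_lt_compat; assert (0 < Rpower c s) by apply Rpower_gt0; lra).
  assert (H := hh_Hyp al c Hc).
  assert (HIa : forall u v, 0 < u -> u <= v -> RInt (hh al c) u v <= k * L).
  { intros u v Hu Huv. rewrite subst_eq by lra. fold s k.
    apply Rmult_le_compat_l; [lra|]. apply Ia.
    - apply Rmult_lt_0_compat; auto; apply pow_lt; auto.
    - apply Rmult_le_compat_l; [lra|]. apply pow_incr; lra. }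
  assert (HIb : forall d, 0 < d -> exists eta, 0 < eta /\ exists X, forall u v,
       0 < u -> u < eta -> X < v -> k * L - d < RInt (hh al c) u v).
  { intros d Hd. destruct (Ib (d / k) ltac:(apply Rdiv_lt_0_compat; lra))
      as (eg & Heg & Xg & HX).
    exists (sqrt (eg / c)). split.
    { apply sqrt_lt_R0. apply Rdiv_lt_0_compat; lra. }
    exists (sqrt (Rabs Xg / c)). intros u v Hu Hue Hv.
    assert (Hv0 : 0 < v).
    { apply Rle_lt_trans with (sqrt (Rabs Xg / c)); auto. apply sqrt_pos. }
    rewrite subst_eq by lra. fold s k.
    assert (A1 : c * u ^ 2 < eg).
    { assert (H0 : u ^ 2 < sqrt (eg / c) ^ 2) by (apply sq_lt; lra).
      rewrite pow2_sqrt in H0 by (apply Rdiv_le_0_compat; lra).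
      apply Rmult_lt_reg_r with (/ c). apply Rinv_0_lt_compat; lra.
      replace (c * u ^ 2 * / c) with (u ^ 2) by (field; lra). exact H0. }
    assert (A2 : Xg < c * v ^ 2).
    { assert (H0 : sqrt (Rabs Xg / c) ^ 2 < v ^ 2).
      { apply sq_lt. split; [apply sqrt_pos|auto]. }
      rewrite pow2_sqrt in H0 by (apply Rdiv_le_0_compat; [apply Rabs_pos|lra]).
      apply Rle_lt_trans with (Rabs Xg); [apply Rle_abs|].
      apply Rmult_lt_reg_r with (/ c). apply Rinv_0_lt_compat; lra.
      replace (c * v ^ 2 * / c) with (v ^ 2) by (field; lra). exact H0. }
    assert (K := HX (c * u ^ 2) (c * v ^ 2)
      ltac:(apply Rmult_lt_0_compat; auto; apply pow_lt; auto) A1 A2).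
    assert (H0 : k * (L - d / k) < k * RInt (G s) (c * u ^ 2) (c * v ^ 2))
      by (apply Rmult_lt_compat_l; auto).
    replace (k * (L - d / k)) with (k * L - d) in H0 by (field; lra). exact H0. }
  split.
  - intros e He. destruct (series_bounds _ _ _ e H He HIa) as [Hs1 _]. exact Hs1.
  - intros eps Hp Hl. apply (riemann_lim _ _ _ H HIa HIb eps Hp Hl).
    apply ehh_lim; auto.
Qed.


Lemma Rpower_exp y a : Rpower (exp y) a = exp (a * y).
Proof. unfold Rpower. rewrite ln_exp. reflexivity. Qed.

Lemma pt1 p a n x : 0 < x ->
  fpa p a x * Rpower x n = hh (2 * a * p + n) a x.
Proof.
  intro Hx. unfold fpa, fp, hh, Rpower.
  rewrite ln_mult by apply exp_pos. rewrite !ln_exp.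
  rewrite <- !exp_plus. f_equal. ring.
Qed.

Lemma pt2 p a1 a2 n x D : 0 < x -> 0 < D ->
  fpa p a1 x * fpa p a2 (x / D) * Rpower x n =
  Rpower D (- (2 * a2 * p)) * hh (2 * (a1 + a2) * p + n) (a1 + a2 / D ^ 2) x.
Proof.
  intros Hx HD. unfold fpa, fp, hh, Rpower.
  rewrite !ln_mult by apply exp_pos. rewrite !ln_exp.
  rewrite ln_div by auto.
  rewrite <- !exp_plus. f_equal. field. lra.
Qed.

Lemma Rpower_split y E n : 0 < y -> 0 < E ->
  Rpower y n = Rpower E n * Rpower (y * / E) n.
Proof.
  intros Hy HE. rewrite Rpower_mult_distr by (auto; apply Rmult_lt_0_compat; auto;
    apply Rinv_0_lt_compat; auto).
  f_equal. field. lra.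
Qed.

Lemma eps_lim B : 1 < B -> is_lim_seq (fun j => / Rpower B (INR j)) 0.
Proof.
  intro HB. apply is_lim_seq_ext with (fun j => (/ B) ^ j).
  - intro j. rewrite Rpower_pow by lra. rewrite pow_inv. reflexivity.
  - apply is_lim_seq_geom. rewrite Rabs_pos_eq.
    + apply Rmult_lt_reg_l with B; [lra|]. rewrite Rinv_r by lra. lra.
    + left; apply Rinv_0_lt_compat; lra.
Qed.

Lemma F_split B n j : 1 < B ->
  Rpower B ((n + 1) * INR j) = Rpower (Rpower B (INR j)) n * Rpower B (INR j).
Proof.
  intro HB. rewrite Rpower_mult. rewrite <- Rpower_plus. f_equal. ring.
Qed.

Lemma summ1 p a n E k : 0 < E ->
  fpa p a (INR (k + 1) / E) * Rpower (INR (k + 1)) n =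
  Rpower E n * hh (2 * a * p + n) a (INR (S k) * / E).
Proof.
  intro HE. replace (k + 1)%nat with (S k) by lia.
  assert (Hy : 0 < INR (S k)) by (apply lt_0_INR; lia).
  rewrite (Rpower_split (INR (S k)) E n Hy HE). unfold Rdiv.
  rewrite <- pt1 by (apply Rmult_lt_0_compat; auto; apply Rinv_0_lt_compat; auto).
  ring.
Qed.

Lemma summ2 p a1 a2 n E D k : 0 < E -> 0 < D ->
  fpa p a1 (INR (k + 1) / E) * fpa p a2 (INR (k + 1) / (E * D)) * Rpower (INR (k + 1)) n =
  Rpower E n * (Rpower D (- (2 * a2 * p)) *
     hh (2 * (a1 + a2) * p + n) (a1 + a2 / D ^ 2) (INR (S k) * / E)).
Proof.
  intros HE HD. replace (k + 1)%nat with (S k) by lia.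
  assert (Hy : 0 < INR (S k)) by (apply lt_0_INR; lia).
  assert (Hx : 0 < INR (S k) * / E)
    by (apply Rmult_lt_0_compat; auto; apply Rinv_0_lt_compat; auto).
  rewrite (Rpower_split (INR (S k)) E n Hy HE).
  replace (INR (S k) / (E * D)) with (INR (S k) * / E / D) by (field; lra).
  unfold Rdiv at 1.
  rewrite <- (pt2 p a1 a2 n _ D Hx HD). ring.
Qed.


Lemma tau_id B n p a1 a2 dj : 1 < B -> 0 < a1 -> 0 < a2 ->
  tau B n p a1 a2 dj / Rpower (a1 + a2) ((a1 + a2) * p + (n + 1) / 2) =
  Rpower (Rpower B (IZR dj)) (- (2 * a2 * p)) /
  Rpower (a1 + a2 / Rpower B (IZR dj) ^ 2) ((a1 + a2) * p + (n + 1) / 2).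
Proof.
  intros HB H1 H2. unfold tau. rewrite (Rpower_Ropp B (IZR dj)).
  set (D := Rpower B (IZR dj)). assert (HD : 0 < D) by apply Rpower_gt0.
  set (s := (a1 + a2) * p + (n + 1) / 2).
  set (c := a1 + a2 / D ^ 2).
  assert (Hc : 0 < c).
  { unfold c. assert (0 < a2 / D ^ 2) by (apply Rdiv_lt_0_compat; auto; apply pow_lt; auto). lra. }
  replace (a1 * D + a2 * / D) with (D * c) by (unfold c; field; lra).
  assert (E1 : Rpower B (IZR dj * ((a1 - a2) * p + (n + 1) / 2)) =
               Rpower D ((a1 - a2) * p + (n + 1) / 2)).
  { unfold D. rewrite Rpower_mult. reflexivity. }
  rewrite E1.
  unfold Rpower. rewrite ln_div by (try apply Rmult_lt_0_compat; lra).
  rewrite ln_mult by lra.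
  unfold Rdiv. rewrite <- ?exp_Ropp, <- ?exp_plus.
  f_equal. unfold s. unfold Rdiv. ring.
Qed.

Theorem lemma19 (B p n : R) (HB : 1 < B) (Hp : 0 < p) :
  (forall a : R, 0 < a -> 2 * a * p + n > -1 ->
     (forall j : nat,
        ex_series (fun k : nat =>
          fpa p a (INR (k + 1) / Rpower B (INR j)) * Rpower (INR (k + 1)) n)) /\
     is_lim_seq (fun j : nat =>
        (Series (fun k : nat =>
            fpa p a (INR (k + 1) / Rpower B (INR j)) * Rpower (INR (k + 1)) n)
         - Rpower B ((n + 1) * INR j)
           / (2 * Rpower a (a * p + (n + 1) / 2))
           * Gamma (a * p + (n + 1) / 2))
        / Rpower B ((n + 1) * INR j)) 0) /\
  (forall (a1 a2 : R) (dj : Z), 0 < a1 -> 0 < a2 ->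
     2 * (a1 + a2) * p + n > -1 ->
     (forall j : nat,
        ex_series (fun k : nat =>
          fpa p a1 (INR (k + 1) / Rpower B (INR j))
          * fpa p a2 (INR (k + 1) / Rpower B (INR j + IZR dj))
          * Rpower (INR (k + 1)) n)) /\
     is_lim_seq (fun j : nat =>
        (Series (fun k : nat =>
            fpa p a1 (INR (k + 1) / Rpower B (INR j))
            * fpa p a2 (INR (k + 1) / Rpower B (INR j + IZR dj))
            * Rpower (INR (k + 1)) n)
         - Rpower B ((n + 1) * INR j) * tau B n p a1 a2 dj
           / (2 * Rpower (a1 + a2) ((a1 + a2) * p + (n + 1) / 2))
           * Gamma ((a1 + a2) * p + (n + 1) / 2))
        / Rpower B ((n + 1) * INR j)) 0).
Proof.
  assert (HEpos : forall j, 0 < Rpower B (INR j)) by (intro; apply Rpower_gt0).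
  assert (Hepos : forall j, 0 < / Rpower B (INR j))
    by (intro; apply Rinv_0_lt_compat; auto).
  assert (Hel := eps_lim B HB).
  split.
  - intros a Ha Hn. set (al := 2 * a * p + n).
    assert (Hal : -1 < al) by (unfold al; lra).
    destruct (hh_main Gamma al a (fun s _ => eq_refl) Hal Ha) as [Hex Hlim].
    replace ((al + 1) / 2) with (a * p + (n + 1) / 2) in Hlim by (unfold al; field).
    set (s := a * p + (n + 1) / 2) in *.
    split.
    + intro j. eapply ex_series_ext.
      { intro k. symmetry. apply summ1. apply HEpos. }
      exact (ex_series_scal_l _ _ (Hex _ (Hepos j))).
    + specialize (Hlim _ Hepos Hel).
      set (I := / (2 * Rpower a s) * Gamma s) in *.
      replace (Finite 0) with (Finite (I - I)) by (f_equal; ring).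
      apply is_lim_seq_ext with
        (fun j => / Rpower B (INR j) * Series (fun k => hh al a (INR (S k) * / Rpower B (INR j))) - I).
      2:{ apply is_lim_seq_minus'; auto. apply is_lim_seq_const. }
      intro j. rewrite (Series_ext _ _ (fun k => summ1 p a n _ k (HEpos j))).
      rewrite Series_scal_l. rewrite F_split by auto.
      assert (0 < Rpower (Rpower B (INR j)) n) by apply Rpower_gt0.
      specialize (HEpos j). fold al. set (S := Series _). unfold I. field. split; try lra. assert (0 < Rpower a s) by apply Rpower_gt0. lra.
  - intros a1 a2 dj H1 H2 Hn.
    set (D := Rpower B (IZR dj)). assert (HD : 0 < D) by apply Rpower_gt0.
    set (al := 2 * (a1 + a2) * p + n). set (c := a1 + a2 / D ^ 2).
    assert (Hc : 0 < c).
    { unfold c. assert (0 < a2 / D ^ 2) by (apply Rdiv_lt_0_compat; auto; apply pow_lt; auto). lra. }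
    assert (Hal : -1 < al) by (unfold al; lra).
    set (Kc := Rpower D (- (2 * a2 * p))).
    destruct (hh_main Gamma al c (fun s _ => eq_refl) Hal Hc) as [Hex Hlim].
    replace ((al + 1) / 2) with ((a1 + a2) * p + (n + 1) / 2) in Hlim by (unfold al; field).
    set (s := (a1 + a2) * p + (n + 1) / 2) in *.
    assert (Hsum : forall j k,
      fpa p a1 (INR (k + 1) / Rpower B (INR j))
      * fpa p a2 (INR (k + 1) / Rpower B (INR j + IZR dj))
      * Rpower (INR (k + 1)) n =
      Rpower (Rpower B (INR j)) n * (Kc * hh al c (INR (S k) * / Rpower B (INR j)))).
    { intros j k. rewrite Rpower_plus. apply summ2; auto. }
    split.
    + intro j. eapply ex_series_ext.
      { intro k. symmetry. apply Hsum. }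
      exact (ex_series_scal_l _ _ (ex_series_scal_l Kc _ (Hex _ (Hepos j)))).
    + specialize (Hlim _ Hepos Hel).
      set (I := / (2 * Rpower c s) * Gamma s) in *.
      assert (Ht : tau B n p a1 a2 dj = Kc / Rpower c s * Rpower (a1 + a2) s).
      { assert (K := tau_id B n p a1 a2 dj HB H1 H2). fold D s c Kc in K.
        assert (0 < Rpower (a1 + a2) s) by apply Rpower_gt0.
        rewrite <- K. field. lra. }
      replace (Finite 0) with (Finite (Kc * I - Kc * I)) by (f_equal; ring).
      apply is_lim_seq_ext with
        (fun j => Kc * (/ Rpower B (INR j) * Series (fun k => hh al c (INR (S k) * / Rpower B (INR j)))) - Kc * I).
      2:{ apply is_lim_seq_minus'. 2: apply is_lim_seq_const.
          apply is_lim_seq_mult'; auto. apply is_lim_seq_const. }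
      intro j. rewrite (Series_ext _ _ (Hsum j)).
      rewrite !Series_scal_l. rewrite F_split by auto. rewrite Ht.
      assert (0 < Rpower (Rpower B (INR j)) n) by apply Rpower_gt0.
      specialize (HEpos j). set (S := Series _). unfold I.
      assert (0 < Rpower c s) by apply Rpower_gt0.
      assert (0 < Rpower (a1 + a2) s) by apply Rpower_gt0.
      field. lra.
Qed.
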